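(* Let $v$ be a $C^2$ vector field on an open set $\Omega\subset\mathbb{R}^3$ with $1\mp|v|^2>0$ on $\Omega$ (for a fixed choice of sign), satisfying $\nabla\times\frac{v}{\sqrt{1\mp|v|^2}}=0$ on $\Omega$. Then on $\Omega$: (i) $(1\mp|v|^2)\,\nabla\times v\pm\big[\tfrac12\nabla|v|^2\big]\times v=0$; (ii) $v\cdot(\nabla\times v)=0$; (iii) $\nabla|v|^2\cdot(\nabla\times v)=0$; (iv) $\nabla\times v=\pm\,v\times(v\cdot\nabla)v$.
   Context: This is the curl equation of the ''$v$ problem'': for a solution $u$ of $\pm\nabla\cdot\frac{\nabla u}{\sqrt{1\pm|\nabla u|^2}}=3H$ on $\mathbb{R}^3$, $v:=\pm\frac{\nabla u}{\sqrt{1\pm|\nabla u|^2}}$ satisfies $\nabla\cdot v=3H$ and $\nabla\times\frac{v}{\sqrt{1\mp|v|^2}}=0$. The upper sign corresponds to the Euclidean, the lower to the Minkowskian setting. *)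

(* Defs.v *)
From Stdlib Require Import Reals.
From Coquelicot Require Import Coquelicot.
Open Scope R_scope.

Definition pt : Type := (R * R * R)%type.

Definition px (p : pt) : R := fst (fst p).
Definition py (p : pt) : R := snd (fst p).
Definition pz (p : pt) : R := snd p.

Definition dx (f : pt -> R) (p : pt) : R := Derive (fun t => f (t, py p, pz p)) (px p).
Definition dy (f : pt -> R) (p : pt) : R := Derive (fun t => f (px p, t, pz p)) (py p).
Definition dz (f : pt -> R) (p : pt) : R := Derive (fun t => f (px p, py p, t)) (pz p).

Definition C1_on (Omega : pt -> Prop) (f : pt -> R) : Prop :=
  forall p, Omega p ->
    continuous f p /\
    ex_derive (fun t => f (t, py p, pz p)) (px p) /\
    ex_derive (fun t => f (px p, t, pz p)) (py p) /\
    ex_derive (fun t => f (px p, py p, t)) (pz p) /\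
    continuous (dx f) p /\ continuous (dy f) p /\ continuous (dz f) p.

Definition C2_on (Omega : pt -> Prop) (f : pt -> R) : Prop :=
  C1_on Omega f /\ C1_on Omega (dx f) /\ C1_on Omega (dy f) /\ C1_on Omega (dz f).

Definition vec (a b c : R) : pt := (a, b, c).
Definition dot (u w : pt) : R := px u * px w + py u * py w + pz u * pz w.
Definition cross (u w : pt) : pt :=
  vec (py u * pz w - pz u * py w) (pz u * px w - px u * pz w) (px u * py w - py u * px w).
Definition vscale (a : R) (u : pt) : pt := vec (a * px u) (a * py u) (a * pz u).
Definition vadd (u w : pt) : pt := vec (px u + px w) (py u + py w) (pz u + pz w).
Definition vzero : pt := vec 0 0 0.

Definition field (v1 v2 v3 : pt -> R) (p : pt) : pt := vec (v1 p) (v2 p) (v3 p).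

Definition grad (f : pt -> R) (p : pt) : pt := vec (dx f p) (dy f p) (dz f p).

Definition curl (v1 v2 v3 : pt -> R) (p : pt) : pt :=
  vec (dy v3 p - dz v2 p) (dz v1 p - dx v3 p) (dx v2 p - dy v1 p).

Definition nsq (v1 v2 v3 : pt -> R) (p : pt) : R := v1 p ^ 2 + v2 p ^ 2 + v3 p ^ 2.

Definition convective (v1 v2 v3 : pt -> R) (p : pt) : pt :=
  vec (v1 p * dx v1 p + v2 p * dy v1 p + v3 p * dz v1 p)
      (v1 p * dx v2 p + v2 p * dy v2 p + v3 p * dz v2 p)
      (v1 p * dx v3 p + v2 p * dy v3 p + v3 p * dz v3 p).

(* Main.v *)
Require Import Defs.
From Stdlib Require Import Reals Lra.

From Coquelicot Require Import Coquelicot.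
Open Scope R_scope.

Lemma inner (s : R) (a b c : R -> R) (t da db dc : R) :
  is_derive a t da -> is_derive b t db -> is_derive c t dc ->
  is_derive (fun u => 1 - s * (a u ^ 2 + b u ^ 2 + c u ^ 2)) t
    (- (s * (2 * (a t * da + b t * db + c t * dc)))).
Proof.
  intros Ha Hb Hc.
  auto_derive.
  - repeat split; eexists; eassumption.
  - change (fun x : R => a x) with a; change (fun x : R => b x) with b;
    change (fun x : R => c x) with c.
    rewrite (is_derive_unique _ _ _ Ha), (is_derive_unique _ _ _ Hb), (is_derive_unique _ _ _ Hc).
    ring.
Qed.

Lemma key (s : R) (a b c f : R -> R) t da db dc df :
  is_derive a t da -> is_derive b t db -> is_derive c t dc -> is_derive f t df ->
  1 - s * (a t ^ 2 + b t ^ 2 + c t ^ 2) > 0 ->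
  Derive (fun u => f u / sqrt (1 - s * (a u ^ 2 + b u ^ 2 + c u ^ 2))) t =
  df / sqrt (1 - s * (a t ^ 2 + b t ^ 2 + c t ^ 2)) +
  f t * s * (a t * da + b t * db + c t * dc) /
   ((1 - s * (a t ^ 2 + b t ^ 2 + c t ^ 2)) * sqrt (1 - s * (a t ^ 2 + b t ^ 2 + c t ^ 2))).
Proof.
  intros Ha Hb Hc Hf HW.
  assert (Hs : 0 < sqrt (1 - s * (a t ^ 2 + b t ^ 2 + c t ^ 2))) by (apply sqrt_lt_R0; lra).
  erewrite is_derive_unique.
  2:{ apply (is_derive_div f (fun u => sqrt (1 - s * (a u ^ 2 + b u ^ 2 + c u ^ 2)))).
  - exact Hf.
  - apply (is_derive_sqrt (fun u => 1 - s * (a u ^ 2 + b u ^ 2 + c u ^ 2))).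
    + exact (inner s a b c t da db dc Ha Hb Hc).
    + lra.
  - lra. }
  set (W := 1 - s * (a t ^ 2 + b t ^ 2 + c t ^ 2)) in *.
  set (q := sqrt W) in *.
  assert (Hq : q * q = W) by (apply sqrt_sqrt; lra).
  rewrite <- Hq. field. lra.
Qed.

Lemma nsqd (a b c : R -> R) (t da db dc : R) :
  is_derive a t da -> is_derive b t db -> is_derive c t dc ->
  Derive (fun u => a u ^ 2 + b u ^ 2 + c u ^ 2) t = 2 * (a t * da + b t * db + c t * dc).
Proof.
  intros Ha Hb Hc. apply is_derive_unique.
  auto_derive.
  - repeat split; eexists; eassumption.
  - change (fun x : R => a x) with a; change (fun x : R => b x) with b;
    change (fun x : R => c x) with c.
    rewrite (is_derive_unique _ _ _ Ha), (is_derive_unique _ _ _ Hb), (is_derive_unique _ _ _ Hc).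
    ring.
Qed.

Theorem mainTheorem2 (s : R) (Omega : pt -> Prop) (v1 v2 v3 : pt -> R) :
  (s = 1 \/ s = -1) ->
  open Omega ->
  C2_on Omega v1 -> C2_on Omega v2 -> C2_on Omega v3 ->
  (forall p, Omega p -> 1 - s * nsq v1 v2 v3 p > 0) ->
  (forall p, Omega p ->
     curl (fun q => v1 q / sqrt (1 - s * nsq v1 v2 v3 q))
          (fun q => v2 q / sqrt (1 - s * nsq v1 v2 v3 q))
          (fun q => v3 q / sqrt (1 - s * nsq v1 v2 v3 q)) p = vzero) ->
  forall p, Omega p ->
    vadd (vscale (1 - s * nsq v1 v2 v3 p) (curl v1 v2 v3 p))
         (vscale s (cross (vscale (1/2) (grad (nsq v1 v2 v3) p)) (field v1 v2 v3 p)))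
      = vzero /\
    dot (field v1 v2 v3 p) (curl v1 v2 v3 p) = 0 /\
    dot (grad (nsq v1 v2 v3) p) (curl v1 v2 v3 p) = 0 /\
    curl v1 v2 v3 p = vscale s (cross (field v1 v2 v3 p) (convective v1 v2 v3 p)).
Proof.
  intros _ _ H1 H2 H3 HWp Hcurl p Hp.
  pose proof (HWp p Hp) as HW. pose proof (Hcurl p Hp) as Hc.
  destruct p as [[x y] z].
  destruct (proj1 H1 _ Hp) as [_ [e1x [e1y [e1z _]]]].
  destruct (proj1 H2 _ Hp) as [_ [e2x [e2y [e2z _]]]].
  destruct (proj1 H3 _ Hp) as [_ [e3x [e3y [e3z _]]]].
  simpl in e1x, e1y, e1z, e2x, e2y, e2z, e3x, e3y, e3z.
  assert (D1x : is_derive (fun t : R => v1 (t,y,z)) x (dx v1 (x, y, z))) by (apply Derive_correct; exact e1x).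
  assert (D2x : is_derive (fun t : R => v2 (t,y,z)) x (dx v2 (x, y, z))) by (apply Derive_correct; exact e2x).
  assert (D3x : is_derive (fun t : R => v3 (t,y,z)) x (dx v3 (x, y, z))) by (apply Derive_correct; exact e3x).
  assert (D1y : is_derive (fun t : R => v1 (x,t,z)) y (dy v1 (x, y, z))) by (apply Derive_correct; exact e1y).
  assert (D2y : is_derive (fun t : R => v2 (x,t,z)) y (dy v2 (x, y, z))) by (apply Derive_correct; exact e2y).
  assert (D3y : is_derive (fun t : R => v3 (x,t,z)) y (dy v3 (x, y, z))) by (apply Derive_correct; exact e3y).
  assert (D1z : is_derive (fun t : R => v1 (x,y,t)) z (dz v1 (x, y, z))) by (apply Derive_correct; exact e1z).
  assert (D2z : is_derive (fun t : R => v2 (x,y,t)) z (dz v2 (x, y, z))) by (apply Derive_correct; exact e2z).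
  assert (D3z : is_derive (fun t : R => v3 (x,y,t)) z (dz v3 (x, y, z))) by (apply Derive_correct; exact e3z).
  unfold nsq in HW.
  pose proof (key s _ _ _ _ _ _ _ _ _ D1x D2x D3x D1x HW) as K1x.
  pose proof (key s _ _ _ _ _ _ _ _ _ D1x D2x D3x D2x HW) as K2x.
  pose proof (key s _ _ _ _ _ _ _ _ _ D1x D2x D3x D3x HW) as K3x.
  pose proof (key s _ _ _ _ _ _ _ _ _ D1y D2y D3y D1y HW) as K1y.
  pose proof (key s _ _ _ _ _ _ _ _ _ D1y D2y D3y D2y HW) as K2y.
  pose proof (key s _ _ _ _ _ _ _ _ _ D1y D2y D3y D3y HW) as K3y.
  pose proof (key s _ _ _ _ _ _ _ _ _ D1z D2z D3z D1z HW) as K1z.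
  pose proof (key s _ _ _ _ _ _ _ _ _ D1z D2z D3z D2z HW) as K2z.
  pose proof (key s _ _ _ _ _ _ _ _ _ D1z D2z D3z D3z HW) as K3z.
  pose proof (nsqd _ _ _ _ _ _ _ D1x D2x D3x) as Nx.
  pose proof (nsqd _ _ _ _ _ _ _ D1y D2y D3y) as Ny.
  pose proof (nsqd _ _ _ _ _ _ _ D1z D2z D3z) as Nz.
  unfold curl, vzero, vec in Hc. injection Hc as c1 c2 c3.
  unfold dx, dy, dz, px, py, pz in c1, c2, c3. cbn [fst snd] in c1, c2, c3. unfold nsq in c1, c2, c3.
  cbv beta in K1x, K2x, K3x, K1y, K2y, K3y, K1z, K2z, K3z, Nx, Ny, Nz.
  rewrite K3y, K2z in c1. rewrite K1z, K3x in c2. rewrite K2x, K1y in c3.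
  assert (Nx' : dx (nsq v1 v2 v3) (x,y,z) = 2 * (v1 (x, y, z) * dx v1 (x, y, z) + v2 (x, y, z) * dx v2 (x, y, z) + v3 (x, y, z) * dx v3 (x, y, z))) by exact Nx.
  assert (Ny' : dy (nsq v1 v2 v3) (x,y,z) = 2 * (v1 (x, y, z) * dy v1 (x, y, z) + v2 (x, y, z) * dy v2 (x, y, z) + v3 (x, y, z) * dy v3 (x, y, z))) by exact Ny.
  assert (Nz' : dz (nsq v1 v2 v3) (x,y,z) = 2 * (v1 (x, y, z) * dz v1 (x, y, z) + v2 (x, y, z) * dz v2 (x, y, z) + v3 (x, y, z) * dz v3 (x, y, z))) by exact Nz.
  unfold grad. rewrite Nx', Ny', Nz'.
  unfold curl, convective, field, cross, vscale, vadd, dot, vzero, vec, nsq. clear Nx Ny Nz Nx' Ny' Nz' K1x K2x K3x K1y K2y K3y K1z K2z K3z.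
  cbn [fst snd px py pz].
  set (u1 := v1 (x,y,z)) in *. set (u2 := v2 (x,y,z)) in *. set (u3 := v3 (x,y,z)) in *.
  set (a11 := dx v1 (x,y,z)) in *. set (a12 := dy v1 (x,y,z)) in *. set (a13 := dz v1 (x,y,z)) in *.
  set (a21 := dx v2 (x,y,z)) in *. set (a22 := dy v2 (x,y,z)) in *. set (a23 := dz v2 (x,y,z)) in *.
  set (a31 := dx v3 (x,y,z)) in *. set (a32 := dy v3 (x,y,z)) in *. set (a33 := dz v3 (x,y,z)) in *.
  set (W := 1 - s * (u1 ^ 2 + u2 ^ 2 + u3 ^ 2)) in *.
  set (S := sqrt W) in *.
  assert (HS : 0 < S) by (apply sqrt_lt_R0; lra).
  assert (HSS : S * S = W) by (apply sqrt_sqrt; lra).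
  set (G1 := u1 * a11 + u2 * a21 + u3 * a31).
  set (G2 := u1 * a12 + u2 * a22 + u3 * a32).
  set (G3 := u1 * a13 + u2 * a23 + u3 * a33).
  assert (E1 : W * (a32 - a23) + s * (u3 * G2 - u2 * G3) = 0).
  { match type of c1 with ?L = 0 =>
      replace (W * (a32 - a23) + s * (u3 * G2 - u2 * G3)) with (L * (W * S)) end.
    rewrite c1; ring. unfold G2, G3. field. split; lra. }
  assert (E2 : W * (a13 - a31) + s * (u1 * G3 - u3 * G1) = 0).
  { match type of c2 with ?L = 0 =>
      replace (W * (a13 - a31) + s * (u1 * G3 - u3 * G1)) with (L * (W * S)) end.
    rewrite c2; ring. unfold G1, G3. field. split; lra. }
  assert (E3 : W * (a21 - a12) + s * (u2 * G1 - u1 * G2) = 0).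
  { match type of c3 with ?L = 0 =>
      replace (W * (a21 - a12) + s * (u2 * G1 - u1 * G2)) with (L * (W * S)) end.
    rewrite c3; ring. unfold G1, G2. field. split; lra. }
  assert (HX : W * (u1 * (a32 - a23) + u2 * (a13 - a31) + u3 * (a21 - a12)) =
     u1 * (W * (a32 - a23) + s * (u3 * G2 - u2 * G3)) + u2 * (W * (a13 - a31) + s * (u1 * G3 - u3 * G1))
     + u3 * (W * (a21 - a12) + s * (u2 * G1 - u1 * G2))) by ring.
  rewrite E1, E2, E3 in HX.
  assert (X0 : u1 * (a32 - a23) + u2 * (a13 - a31) + u3 * (a21 - a12) = 0).
  { assert (Z : W * (u1 * (a32 - a23) + u2 * (a13 - a31) + u3 * (a21 - a12)) = 0) by (rewrite HX; ring).
    destruct (Rmult_integral _ _ Z) as [h|h]; [lra|exact h]. }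
  assert (HY : W * (2 * G1 * (a32 - a23) + 2 * G2 * (a13 - a31) + 2 * G3 * (a21 - a12)) =
     2 * (G1 * (W * (a32 - a23) + s * (u3 * G2 - u2 * G3)) + G2 * (W * (a13 - a31) + s * (u1 * G3 - u3 * G1))
     + G3 * (W * (a21 - a12) + s * (u2 * G1 - u1 * G2)))) by ring.
  rewrite E1, E2, E3 in HY.
  assert (Y0 : 2 * G1 * (a32 - a23) + 2 * G2 * (a13 - a31) + 2 * G3 * (a21 - a12) = 0).
  { assert (Z : W * (2 * G1 * (a32 - a23) + 2 * G2 * (a13 - a31) + 2 * G3 * (a21 - a12)) = 0) by (rewrite HY; ring).
    destruct (Rmult_integral _ _ Z) as [h|h]; [lra|exact h]. }
  split; [|split; [exact X0|split; [exact Y0|]]].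
  - f_equal; [f_equal|]; lra.
  - f_equal; [f_equal|]; apply Rminus_diag_uniq.
    + transitivity ((W * (a32 - a23) + s * (u3 * G2 - u2 * G3)) + s * u1 * (u1 * (a32 - a23) + u2 * (a13 - a31) + u3 * (a21 - a12))).
      * unfold W, G1, G2, G3; ring.
      * rewrite E1, X0; ring.
    + transitivity ((W * (a13 - a31) + s * (u1 * G3 - u3 * G1)) + s * u2 * (u1 * (a32 - a23) + u2 * (a13 - a31) + u3 * (a21 - a12))).
      * unfold W, G1, G2, G3; ring.
      * rewrite E2, X0; ring.
    + transitivity ((W * (a21 - a12) + s * (u2 * G1 - u1 * G2)) + s * u3 * (u1 * (a32 - a23) + u2 * (a13 - a31) + u3 * (a21 - a12))).
      * unfold W, G1, G2, G3; ring.
      * rewrite E3, X0; ring.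
Qed.
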